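(* There exists a finite simple graph $G$ such that $4=\pi'(G)<\chi'(G)=5$.
   Context: An orthogonal $d$-edge-coloring of $G$ is a function $f:E(G)\to\mathbb{R}^d\setminus\{0\}$ such that $f(e)\perp f(e')$ whenever the distinct edges $e,e'$ share an endpoint. The orthogonal index $\pi'(G)$ is the minimum $d$ for which $G$ has an orthogonal $d$-edge-coloring. $\chi'(G)$ is the chromatic index. *)

(* Defs.v *)
From mathcomp Require Import all_boot.
From Stdlib Require Import Reals.

Set Implicit Arguments. Unset Strict Implicit. Unset Printing Implicit Defensive.

Definition simple_graph (T : finType) (e : rel T) : Prop :=
  symmetric e /\ irreflexive e.

Definition vecR (d : nat) := 'I_d -> R.

Definition dotR (d : nat) (u v : vecR d) : R :=
  \big[Rplus/R0]_(i < d) Rmult (u i) (v i).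

Definition nonzero_vec (d : nat) (u : vecR d) : Prop := exists i, u i <> R0.

(* An edge labelling is a function on ordered pairs that is symmetric on edges,
   i.e. a function on the unordered edges {x,y}. Two distinct edges sharing an
   endpoint are xy and xz with y <> z. *)

Definition orth_edge_coloring (T : finType) (e : rel T) (d : nat)
    (f : T -> T -> vecR d) : Prop :=
  (forall x y, e x y -> f x y = f y x) /\
  (forall x y, e x y -> nonzero_vec (f x y)) /\
  (forall x y z, e x y -> e x z -> y != z -> dotR (f x y) (f x z) = R0).

Definition has_orth_coloring (T : finType) (e : rel T) (d : nat) : Prop :=
  exists f : T -> T -> vecR d, orth_edge_coloring e f.

Definition orth_index_is (T : finType) (e : rel T) (d : nat) : Prop :=
  has_orth_coloring e d /\ (forall d', (d' < d)%N -> ~ has_orth_coloring e d').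

Definition proper_edge_coloring (T : finType) (e : rel T) (k : nat)
    (c : T -> T -> 'I_k) : Prop :=
  (forall x y, e x y -> c x y = c y x) /\
  (forall x y z, e x y -> e x z -> y != z -> c x y <> c x z).

Definition has_edge_coloring (T : finType) (e : rel T) (k : nat) : Prop :=
  exists c : T -> T -> 'I_k, proper_edge_coloring e c.

Definition chrom_index_is (T : finType) (e : rel T) (k : nat) : Prop :=
  has_edge_coloring e k /\ (forall k', (k' < k)%N -> ~ has_edge_coloring e k').

(* Main.v *)
Require Import Defs.
From mathcomp Require Import all_boot.
From Stdlib Require Import Reals.
From mathcomp Require Import all_order all_algebra.
From mathcomp Require Import Rstruct.
From Stdlib Require Import ZArith.
Import Order.TTheory GRing.Theory Num.Theory.

Section LA.
Local Open Scope ring_scope.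
Lemma dotE (d:nat) (u v : vecR d) : dotR u v = \sum_(i < d) u i * v i.
Proof. reflexivity. Qed.

Lemma dot_self_neq0 (d : nat) (u : vecR d) : nonzero_vec u -> dotR u u != 0.
Proof.
case=> k hk; rewrite dotE.
have hk' : u k != 0 by apply/eqP.
apply/lt0r_neq0.
rewrite (bigD1 k) //=.
apply: ltr_pwDl.
  by rewrite lt_def mulf_neq0 //= -expr2 sqr_ge0.
by apply: sumr_ge0 => i _; rewrite -expr2 sqr_ge0.
Qed.

Lemma four_orth (d : nat) (u : 'I_4 -> vecR d) :
  (forall i, nonzero_vec (u i)) ->
  (forall i j, i != j -> dotR (u i) (u j) = 0) -> leq 4 d.
Proof.
move=> hnz horth.
pose M : 'M[R]_(4,d) := \matrix_(i,j) u i j.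
have hMM : M *m M^T = diag_mx (\row_i dotR (u i) (u i)).
  apply/matrixP => i j; rewrite !mxE.
  case: eqVneq => [<-|hij]; rewrite ?mulr1n ?mulr0n.
    by rewrite dotE; apply: eq_bigr => k _; rewrite !mxE.
  transitivity (dotR (u i) (u j)); last exact: horth.
  rewrite dotE.
  by apply: eq_bigr => k _; rewrite !mxE.
have hU : M *m M^T \in unitmx.
  rewrite hMM unitmxE det_diag unitfE.
  by apply/prodf_neq0 => i _; rewrite mxE dot_self_neq0.
have := mxrank_unit hU.
move=> h4.
have := mxrankM_maxl M M^T; rewrite h4 => h.
exact: leq_trans h (rank_leq_col M).
Qed.

End LA.

Definition elist : seq (nat * nat) :=
  [:: (0,2); (0,4); (0,5); (0,7); (1,2); (1,3); (1,5); (1,6); (2,3); (2,7);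
      (3,4); (3,8); (4,5); (4,8); (5,6); (6,7); (6,8); (7,8)].

Definition vtab : seq (seq Z) :=
  [:: [:: 0;0;0;1]; [:: 0;1;-1;0]; [:: 0;1;1;0]; [:: 1;0;0;0];
      [:: 1;-1;0;0]; [:: 0;0;1;-1]; [:: 1;1;-1;-1]; [:: 1;1;1;1];
      [:: 1;1;0;0]; [:: 0;0;1;0]; [:: 1;-1;-1;-1]; [:: 1;-1;1;1];
      [:: 1;0;0;1]; [:: 1;1;1;-1]; [:: 1;-1;1;-1]; [:: 0;1;0;-1];
      [:: 1;0;-1;0]; [:: 0;1;0;1]]%Z.

Definition ctab : seq nat := [:: 0;1;2;3;1;0;3;2;2;4;3;1;0;2;4;1;3;0].

Definition adj (x y : 'I_9) : bool :=
  ((nat_of_ord x, nat_of_ord y) \in elist) || ((nat_of_ord y, nat_of_ord x) \in elist).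

Definition key (a b : nat) : nat * nat := if a < b then (a, b) else (b, a).

Lemma key_sym a b : key a b = key b a.
Proof. by rewrite /key; case: ltngtP => // ->. Qed.

Definition vz (x y : 'I_9) : seq Z := nth [::] vtab (index (key x y) elist).
Definition fv (x y : 'I_9) : vecR 4 := fun i => IZR (nth 0%Z (vz x y) i).
Definition dotZ (a b : seq Z) : Z :=
  (nth 0 a 0 * nth 0 b 0 + nth 0 a 1 * nth 0 b 1 + nth 0 a 2 * nth 0 b 2
   + nth 0 a 3 * nth 0 b 3)%Z.

Definition cv (x y : 'I_9) : 'I_5 :=
  Ordinal (ltn_pmod (nth 0 ctab (index (key x y) elist)) (isT : 0 < 5)).

Lemma dot_fv x y z : dotR (fv x y) (fv x z) = IZR (dotZ (vz x y) (vz x z)).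
Proof.
rewrite dotE !big_ord_recr big_ord0 /= /dotZ !plus_IZR !mult_IZR.
by rewrite !RplusE !RmultE add0r.
Qed.

Lemma adj_sym : symmetric adj.
Proof. by move=> x y; rewrite /adj orbC. Qed.

Definition O9 : seq 'I_9 :=
  [:: @Ordinal 9 0 isT; @Ordinal 9 1 isT; @Ordinal 9 2 isT; @Ordinal 9 3 isT;
      @Ordinal 9 4 isT; @Ordinal 9 5 isT; @Ordinal 9 6 isT; @Ordinal 9 7 isT;
      @Ordinal 9 8 isT].
Lemma inO9 (x : 'I_9) : x \in O9.
Proof.
have h : map val O9 = iota 0 9 by [].
by rewrite -(mem_map val_inj) h mem_iota add0n ltn_ord.
Qed.
Lemma O9E : ord_enum 9 = O9.
Proof. by apply: (inj_map val_inj); rewrite val_ord_enum. Qed.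

Lemma adj_irr_b : all (fun x => ~~ adj x x) O9.
Proof. by vm_compute. Qed.

Lemma adj_irr : irreflexive adj.
Proof. by move=> x; apply/negbTE; exact: (allP adj_irr_b x (inO9 x)). Qed.

Lemma orth_b : all (fun x => all (fun y => all (fun z =>
   adj x y ==> adj x z ==> (y != z) ==> Z.eqb (dotZ (vz x y) (vz x z)) 0%Z) O9) O9) O9.
Proof. by vm_compute. Qed.

Lemma nz_b : all (fun x => all (fun y => adj x y ==>
   ~~ Z.eqb (nth 0%Z (vz x y) 0) 0%Z || ~~ Z.eqb (nth 0%Z (vz x y) 1) 0%Z ||
   ~~ Z.eqb (nth 0%Z (vz x y) 2) 0%Z || ~~ Z.eqb (nth 0%Z (vz x y) 3) 0%Z) O9) O9.
Proof. by vm_compute. Qed.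

Lemma col_b : all (fun x => all (fun y => all (fun z =>
   adj x y ==> adj x z ==> (y != z) ==> (cv x y != cv x z)) O9) O9) O9.
Proof. by vm_compute. Qed.

Lemma deg_b : all (fun x => size (filter (adj x) O9) == 4) O9.
Proof. by vm_compute. Qed.

Lemma IZR_neq0 (a : Z) : ~~ Z.eqb a 0%Z -> IZR a <> R0.
Proof. by move=> /negP h /eq_IZR_R0 ha; apply: h; rewrite ha. Qed.

Lemma fv_orth : orth_edge_coloring adj fv.
Proof.
split; [|split].
- by move=> x y _; rewrite /fv /vz key_sym.
- move=> x y hxy.
  have := allP (allP nz_b x (inO9 x)) y (inO9 y); rewrite hxy /=.
  case/orP=> [/orP [/orP [h|h]|h]|h].
  + by exists (@Ordinal 4 0 isT); apply: IZR_neq0.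
  + by exists (@Ordinal 4 1 isT); apply: IZR_neq0.
  + by exists (@Ordinal 4 2 isT); apply: IZR_neq0.
  + by exists (@Ordinal 4 3 isT); apply: IZR_neq0.
- move=> x y z hxy hxz hyz.
  have := allP (allP (allP orth_b x (inO9 x)) y (inO9 y)) z (inO9 z).
  rewrite hxy hxz hyz /= => /Z.eqb_spec h.
  by rewrite dot_fv h.
Qed.

Lemma cv_proper : proper_edge_coloring adj cv.
Proof.
split.
- by move=> x y _; rewrite /cv key_sym.
- move=> x y z hxy hxz hyz.
  have := allP (allP (allP col_b x (inO9 x)) y (inO9 y)) z (inO9 z).
  by rewrite hxy hxz hyz /= => /eqP.
Qed.

Lemma no4 (T : finType) (e : rel T) : symmetric e -> irreflexive e ->
  (forall x, #|[set y | e x y]| = 4) -> odd #|T| ->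
  forall c : T -> T -> 'I_4, ~ proper_edge_coloring e c.
Proof.
move=> es ei deg oT c [csym cpr].
have uniq : forall x y z, e x y -> e x z -> c x y = c x z -> y = z.
  move=> x y z hy hz hc; apply/eqP; apply/negPn/negP => hne.
  exact: (cpr x y z hy hz hne hc).
have surj : forall x (k : 'I_4), exists y, e x y && (c x y == k).
  move=> x k.
  have inj : {in [set y | e x y] &, injective (c x)}.
    by move=> y z; rewrite !inE => hy hz hc; apply: (uniq x).
  have him : c x @: [set y | e x y] = [set: 'I_4].
    apply/eqP; rewrite eqEcard subsetT cardsT card_ord card_in_imset // deg.
    by [].
  have : k \in c x @: [set y | e x y] by rewrite him inE.
  by case/imsetP => y; rewrite inE => hy ->; exists y; rewrite hy eqxx.
pose p x := odflt x [pick y | e x y && (c x y == ord0)].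
have pP x : e x (p x) && (c x (p x) == ord0).
  rewrite /p; case: pickP => [y //|h].
  by case: (surj x ord0) => y hy; rewrite h in hy.
have pp x : p (p x) = x.
  case/andP: (pP x) => h1 /eqP h2; case/andP: (pP (p x)) => h3 /eqP h4.
  apply: (uniq (p x)); [exact: h3 | by rewrite es | ].
  by rewrite h4 -(csym _ _ h1) h2.
have pn x : p x != x.
  case/andP: (pP x) => h _; apply/eqP => hx; rewrite hx in h.
  by rewrite ei in h.
pose A := [set x | leq (enum_rank x).+1 (enum_rank (p x))].
have hC : ~: A = p @: A.
  apply/setP => x; rewrite inE in_set; apply/idP/idP.
  - move=> hx; apply/imsetP; exists (p x); last by rewrite pp.
    rewrite inE pp.
    have hne : enum_rank x != enum_rank (p x).
      by apply/negP => /eqP h; move/eqP: (pn x); apply; apply/esym/enum_rank_inj.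
    by rewrite ltn_neqAle eq_sym hne /= leqNgt.
  - case/imsetP => y; rewrite inE => hy ->; rewrite pp -leqNgt.
    exact: ltnW.
have hinj : injective p by apply: (can_inj pp).
have := cardsC A; rewrite hC card_imset // addnn => hT.
by move: oT; rewrite -hT odd_double.
Qed.

Theorem mainTheorem6 :
  exists (T : finType) (e : rel T),
    simple_graph e /\ orth_index_is e 4 /\ chrom_index_is e 5.
Proof.
exists 'I_9, adj.
have hdeg : forall x, #|[set y | adj x y]| = 4.
  move=> x; rewrite cardsE cardE /enum_mem unlock /= O9E.
  exact: (eqP (allP deg_b x (inO9 x))).
split; [split; [exact: adj_sym | exact: adj_irr] | split].
- split; first by exists fv; exact: fv_orth.
  move=> d' hd' [f [fsym [fnz forth]]].
  pose nb : 'I_4 -> 'I_9 := fun i => nth ord0 [:: @Ordinal 9 2 isT; @Ordinal 9 4 isT; @Ordinal 9 5 isT; @Ordinal 9 7 isT] i.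
  have hnb : forall i, adj ord0 (nb i).
    by move=> i; case: i => [[|[|[|[|//]]]] ?].
  have hnbi : forall i j, i != j -> nb i != nb j.
    by move=> [[|[|[|[|//]]]] ?] [[|[|[|[|//]]]] ?].
  have := @four_orth d' (fun i => f ord0 (nb i)).
  have h4 : leq 4 d' -> False by move=> h; have := leq_trans hd' h; rewrite ltnn.
  move=> H; apply: h4; apply: H.
  + by move=> i; apply: fnz.
  + move=> i j hij; apply: forth; rewrite ?hnb //.
    exact: hnbi.
- split; first by exists cv; exact: cv_proper.
  move=> k hk [c [csym cpr]].
  have hk4 : leq k 4 by [].
  have o9 : odd #|'I_9| by rewrite card_ord.
  apply: (@no4 _ adj adj_sym adj_irr hdeg o9 (fun x y => widen_ord hk4 (c x y))).
  split.
  + by move=> x y hxy; rewrite csym.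
  + move=> x y z hxy hxz hyz h; apply: (cpr x y z hxy hxz hyz).
    by apply/val_inj; move: h => /(congr1 val).
Qed.
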